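(* Let $\mathsf{L}$ be a normal modal logic admitting finite chains and let $t(x,y,z) = \Box(y\vee\Box(z\vee x))\vee x$. Suppose $\mathcal{V}_\mathsf{L}$ satisfies the fixpoint embedding condition with respect to $t$: for any finitely generated $\mathbf{A}\in\mathcal{V}_\mathsf{L}$ and $a,b,c\in A$ there is $\mathbf{B}\in\mathcal{V}_\mathsf{L}$ having $\mathbf{A}$ as a subalgebra such that $\bigvee_{k\in\mathbb{N}} t^k(a,b,c)$ exists in $\mathbf{B}$ and $\bigvee_{k\in\mathbb{N}} t^k(a,b,c) = t\big(\bigvee_{k\in\mathbb{N}} t^k(a,b,c),b,c\big)$. Then $\mathcal{V}_\mathsf{L}$ is not coherent.
   Context: $\mathcal{V}_\mathsf{L}$ denotes the variety of modal algebras corresponding to $\mathsf{L}$. Iterates: $t^0(x,y,z):=x$, $t^{k+1}(x,y,z):=t(t^k(x,y,z),y,z)$. A finite chain is a Kripke frame $(C,R)$ with $C$ finite such that the reflexive closure of $R$ is a total order on $C$; $\mathsf{L}$ admits finite chains if for each $n\in\mathbb{N}$ some $n$-element finite chain is a frame for $\mathsf{L}$. A variety is coherent if every finitely generated subalgebra of a finitely presented member is finitely presented. *)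

(* Defs.v *)
From Stdlib Require List.
From mathcomp Require Import all_boot.
Set Implicit Arguments. Unset Strict Implicit. Unset Printing Implicit Defensive.

Inductive fm : Type :=
| Var : nat -> fm
| Bot : fm
| Top : fm
| Neg : fm -> fm
| And : fm -> fm -> fm
| Or  : fm -> fm -> fm
| Imp : fm -> fm -> fm
| Box : fm -> fm.

Fixpoint subst (s : nat -> fm) (p : fm) : fm :=
  match p with
  | Var i => s i
  | Bot => Bot
  | Top => Top
  | Neg a => Neg (subst s a)
  | And a b => And (subst s a) (subst s b)
  | Or a b => Or (subst s a) (subst s b)
  | Imp a b => Imp (subst s a) (subst s b)
  | Box a => Box (subst s a)
  end.

(* Classical (Boolean) evaluation in which variables and boxed subformulas
   are treated as atoms: [taut p] says p is a substitution instance of a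
   classical propositional tautology. *)
Fixpoint beval (v : fm -> bool) (p : fm) : bool :=
  match p with
  | Var i => v (Var i)
  | Bot => false
  | Top => true
  | Neg a => ~~ beval v a
  | And a b => beval v a && beval v b
  | Or a b => beval v a || beval v b
  | Imp a b => beval v a ==> beval v b
  | Box a => v (Box a)
  end.

Definition taut (p : fm) : Prop := forall v : fm -> bool, beval v p = true.

Definition normal_logic (L : fm -> Prop) : Prop :=
  [/\ (forall p, taut p -> L p),
      (forall p q, L (Imp (Box (Imp p q)) (Imp (Box p) (Box q)))),
      (forall p q, L p -> L (Imp p q) -> L q),
      (forall p, L p -> L (Box p)) &
      (forall p (s : nat -> fm), L p -> L (subst s p))].

Record modalAlgebra := ModalAlgebra {
  carrier :> Type;
  join : carrier -> carrier -> carrier;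
  meet : carrier -> carrier -> carrier;
  compl : carrier -> carrier;
  bot : carrier;
  top : carrier;
  box : carrier -> carrier;
  joinC : forall x y, join x y = join y x;
  meetC : forall x y, meet x y = meet y x;
  joinA : forall x y z, join x (join y z) = join (join x y) z;
  meetA : forall x y z, meet x (meet y z) = meet (meet x y) z;
  joinKmeet : forall x y, join x (meet x y) = x;
  meetKjoin : forall x y, meet x (join x y) = x;
  meet_joinDr : forall x y z, meet x (join y z) = join (meet x y) (meet x z);
  join_meetDr : forall x y z, join x (meet y z) = meet (join x y) (join x z);
  join0x : forall x, join bot x = x;
  meet1x : forall x, meet top x = x;
  join_compl : forall x, join x (compl x) = top;
  meet_compl : forall x, meet x (compl x) = bot;
  box_top : box top = top;
  box_meet : forall x y, box (meet x y) = meet (box x) (box y)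
}.

Arguments join {m}. Arguments meet {m}. Arguments compl {m}.
Arguments bot {m}. Arguments top {m}. Arguments box {m}.

Fixpoint aeval (A : modalAlgebra) (v : nat -> A) (p : fm) : A :=
  match p with
  | Var i => v i
  | Bot => bot
  | Top => top
  | Neg a => compl (aeval v a)
  | And a b => meet (aeval v a) (aeval v b)
  | Or a b => join (aeval v a) (aeval v b)
  | Imp a b => join (compl (aeval v a)) (aeval v b)
  | Box a => box (aeval v a)
  end.

Definition ale (A : modalAlgebra) (x y : A) : Prop := join x y = y.

Definition alg_valid (A : modalAlgebra) (p : fm) : Prop :=
  forall v : nat -> A, aeval v p = top.

Definition V_L (L : fm -> Prop) (A : modalAlgebra) : Prop :=
  forall p, L p -> alg_valid A p.

Definition is_hom (A B : modalAlgebra) (f : A -> B) : Prop :=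
  [/\ (forall x y, f (join x y) = join (f x) (f y)),
      (forall x y, f (meet x y) = meet (f x) (f y)),
      (forall x, f (compl x) = compl (f x)) &
      [/\ f bot = bot, f top = top &
      (forall x, f (box x) = box (f x))]].

Definition embedding (A B : modalAlgebra) (f : A -> B) : Prop :=
  is_hom f /\ injective f.

Definition val_of (A : modalAlgebra) (gs : seq A) : nat -> A :=
  fun i => nth bot gs i.

Definition generated_by (A : modalAlgebra) (gs : seq A) : Prop :=
  forall a : A, exists p, aeval (val_of gs) p = a.

Definition fin_generated (A : modalAlgebra) : Prop :=
  exists gs : seq A, generated_by gs.

Definition fin_presented (V : modalAlgebra -> Prop) (A : modalAlgebra) : Prop :=
  exists (gs : seq A) (E : seq (fm * fm)),
    [/\ generated_by gs,
        (forall e, List.In e E -> aeval (val_of gs) e.1 = aeval (val_of gs) e.2) &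
        (forall C : modalAlgebra, V C -> forall cs : seq C, size cs = size gs ->
           (forall e, List.In e E -> aeval (val_of cs) e.1 = aeval (val_of cs) e.2) ->
           exists h : A -> C, is_hom h /\
             forall i, i < size gs -> h (nth bot gs i) = nth bot cs i)].

(* Coherence: every finitely generated subalgebra of a finitely presented
   member is finitely presented (subalgebras = images of embeddings). *)
Definition coherent (V : modalAlgebra -> Prop) : Prop :=
  forall A : modalAlgebra, V A -> fin_presented V A ->
  forall (B : modalAlgebra) (f : B -> A), embedding f -> fin_generated B ->
  fin_presented V B.

Fixpoint ksat (W : finType) (R : rel W) (V : nat -> W -> bool) (w : W) (p : fm) : Prop :=
  match p with
  | Var i => V i w = true
  | Bot => False
  | Top => True
  | Neg a => ~ ksat R V w a
  | And a b => ksat R V w a /\ ksat R V w b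
  | Or a b => ksat R V w a \/ ksat R V w b
  | Imp a b => ksat R V w a -> ksat R V w b
  | Box a => forall u, R w u -> ksat R V u a
  end.

Definition frame_valid (W : finType) (R : rel W) (p : fm) : Prop :=
  forall (V : nat -> W -> bool) (w : W), ksat R V w p.

Definition is_chain (W : finType) (R : rel W) : Prop :=
  let R' := fun x y => (x == y) || R x y in
  [/\ (forall x y z, R' x y -> R' y z -> R' x z),
      (forall x y, R' x y -> R' y x -> x = y) &
      (forall x y, R' x y \/ R' y x)].

Definition admits_finite_chains (L : fm -> Prop) : Prop :=
  forall n : nat, exists (W : finType) (R : rel W),
    [/\ #|W| = n, is_chain R & forall p, L p -> frame_valid R p].

Definition tt3 (A : modalAlgebra) (x y z : A) : A :=
  join (box (join y (box (join z x)))) x.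

Fixpoint titer (A : modalAlgebra) (k : nat) (x y z : A) : A :=
  match k with
  | 0 => x
  | k'.+1 => tt3 (titer k' x y z) y z
  end.

Definition is_lub (A : modalAlgebra) (F : nat -> A) (s : A) : Prop :=
  (forall k, ale (F k) s) /\ (forall u, (forall k, ale (F k) u) -> ale s u).

Definition fixpoint_embedding_condition (L : fm -> Prop) : Prop :=
  forall A : modalAlgebra, V_L L A -> fin_generated A ->
  forall a b c : A,
  exists (B : modalAlgebra) (f : A -> B),
    [/\ V_L L B, embedding f &
        exists s : B, is_lub (fun k => titer k (f a) (f b) (f c)) s /\
                      s = tt3 s (f b) (f c)].

(* Main.v *)
Require Import Defs.
From mathcomp Require Import all_boot zify.
From Stdlib Require Import FunctionalExtensionality PropExtensionality ProofIrrelevance IndefiniteDescription.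
Set Implicit Arguments. Unset Strict Implicit. Unset Printing Implicit Defensive.

Section AlgLemmas.
Variable A : modalAlgebra.
Implicit Types x y z c : A.

Lemma joinxx x : join x x = x.
Proof. have H := joinKmeet x (join x x). by rewrite meetKjoin in H. Qed.

Lemma join_top x : join x top = top.
Proof. by rewrite -(join_compl x) joinA joinxx. Qed.

Lemma ale_refl x : ale x x.
Proof. exact: joinxx. Qed.

Lemma ale_trans x y z : ale x y -> ale y z -> ale x z.
Proof. by rewrite /ale => H1 H2; rewrite -H2 joinA H1. Qed.

Lemma ale_joinr x y : ale x (join y x).
Proof. by rewrite /ale joinC -joinA joinxx. Qed.

Lemma ale_meet x y : ale x y -> meet x y = x.
Proof. by rewrite /ale => <-; rewrite meetKjoin. Qed.

Lemma box_mono x y : ale x y -> ale (box x) (box y).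
Proof.
move=> /ale_meet H; rewrite /ale -{1}H box_meet joinC meetC.
by rewrite joinKmeet.
Qed.

Lemma join_mono c x y : ale x y -> ale (join c x) (join c y).
Proof.
rewrite /ale => H.
by rewrite -joinA [join x (join c y)]joinA [join x c]joinC -joinA H joinA joinxx.
Qed.

Lemma join_monor c x y : ale x y -> ale (join x c) (join y c).
Proof. by rewrite (joinC x) (joinC y); apply: join_mono. Qed.

Lemma tt3_mono x x' b c : ale x x' -> ale (tt3 x b c) (tt3 x' b c).
Proof.
move=> H; rewrite /tt3.
apply: (@ale_trans _ (join (box (join b (box (join c x')))) x)).
  by apply/join_monor/box_mono/join_mono/box_mono/join_mono.
exact: join_mono.
Qed.

Lemma tt3_ext x b c : ale x (tt3 x b c).
Proof. exact: ale_joinr. Qed.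

Lemma titer_S k x b c : ale (titer k x b c) (titer k.+1 x b c).
Proof. exact: tt3_ext. Qed.

Lemma titer_monok m n x b c : m <= n -> ale (titer m x b c) (titer n x b c).
Proof.
elim: n => [|n IH]; first by rewrite leqn0 => /eqP ->; apply: ale_refl.
rewrite leq_eqVlt => /orP [/eqP -> | H]; first exact: ale_refl.
exact: ale_trans (IH H) (titer_S _ _ _ _).
Qed.

Lemma titer_le_fix k a b c s : ale a s -> s = tt3 s b c -> ale (titer k a b c) s.
Proof.
move=> Has Hs; elim: k => [|k IH] //=.
by rewrite Hs; apply: tt3_mono.
Qed.

Lemma ale_imp_top x y : ale x y -> join (compl x) y = top.
Proof.
by rewrite /ale => <-; rewrite joinA (joinC _ x) join_compl joinC join_top.
Qed.

End AlgLemmas.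

Lemma aeval_ext (A : modalAlgebra) (e e' : nat -> A) p :
  (forall i, e i = e' i) -> aeval e p = aeval e' p.
Proof. by move=> H; elim: p => //= [a ->|a -> b ->|a -> b ->|a -> b ->|a ->]. Qed.

Lemma aeval_subst (A : modalAlgebra) (e : nat -> A) s p :
  aeval e (subst s p) = aeval (fun i => aeval e (s i)) p.
Proof. by elim: p => //= [a ->|a -> b ->|a -> b ->|a -> b ->|a ->]. Qed.

Section Hom.
Variables (A B : modalAlgebra) (f : A -> B).
Hypothesis hf : is_hom f.

Lemma hom_aeval (e : nat -> A) p : f (aeval e p) = aeval (fun i => f (e i)) p.
Proof.
case: hf => hj hm hc [hb ht hbox].
by elim: p => //= [a <-|a <- b <-|a <- b <-|a <- b <-|a <-]; rewrite ?hj ?hm ?hc ?hbox.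
Qed.

Lemma hom_tt3 x b c : f (tt3 x b c) = tt3 (f x) (f b) (f c).
Proof. by case: hf => hj hm hc [hb ht hbox]; rewrite /tt3 hj hbox hj hbox hj. Qed.

Lemma hom_titer k x b c : f (titer k x b c) = titer k (f x) (f b) (f c).
Proof. elim: k => [|k IH] //=. by rewrite hom_tt3 IH. Qed.

Lemma hom_ale x y : ale x y -> ale (f x) (f y).
Proof. case: hf => hj _ _ _; rewrite /ale => H. by rewrite -H hj joinA joinxx. Qed.
End Hom.

Record qrel (L : fm -> Prop) := QRel {
  qr :> fm -> fm -> Prop;
  qr_refl : forall p, qr p p;
  qr_sym : forall p q, qr p q -> qr q p;
  qr_trans : forall p q r, qr p q -> qr q r -> qr p r;
  qr_neg : forall p q, qr p q -> qr (Neg p) (Neg q);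
  qr_and : forall p p' q q', qr p p' -> qr q q' -> qr (And p q) (And p' q');
  qr_or : forall p p' q q', qr p p' -> qr q q' -> qr (Or p q) (Or p' q');
  qr_imp : forall p p' q q', qr p p' -> qr q q' -> qr (Imp p q) (Imp p' q');
  qr_box : forall p q, qr p q -> qr (Box p) (Box q);
  qr_sem : forall p q, (forall C : modalAlgebra, V_L L C -> forall e : nat -> C,
              aeval e p = aeval e q) -> qr p q }.

Lemma sig_ext (T : Type) (P : T -> Prop) (x y : {a : T | P a}) :
  proj1_sig x = proj1_sig y -> x = y.
Proof. case: x => a Ha; case: y => b Hb /= E; subst b; f_equal; apply: proof_irrelevance. Qed.

Section Quot.
Variables (L : fm -> Prop) (R : qrel L).

Definition qT := {X : fm -> Prop | exists p, X = R p}.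
Definition cls (p : fm) : qT := exist _ (R p) (ex_intro _ p erefl).
Definition rep (X : qT) : fm := proj1_sig (constructive_indefinite_description _ (proj2_sig X)).

Lemma cls_rep X : cls (rep X) = X.
Proof.
apply: sig_ext => /=; rewrite /rep.
by case: (constructive_indefinite_description _ _) => p /= ->.
Qed.

Lemma cls_eq p q : cls p = cls q <-> R p q.
Proof.
split.
  move=> /(f_equal (@proj1_sig _ _)) /= E.
  by rewrite E; apply: qr_refl.
move=> H; apply: sig_ext => /=.
apply: functional_extensionality => r; apply: propositional_extensionality.
split => Hr; [apply: qr_trans (qr_sym H) Hr | apply: qr_trans H Hr].
Qed.

Lemma cls_surj X : exists p, X = cls p.
Proof. by exists (rep X); rewrite cls_rep. Qed.

Lemma rep_cls p : R (rep (cls p)) p.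
Proof. by apply/cls_eq; rewrite cls_rep. Qed.

Definition qjoin := locked (fun X Y => cls (Or (rep X) (rep Y))).
Definition qmeet := locked (fun X Y => cls (And (rep X) (rep Y))).
Definition qcompl := locked (fun X => cls (Neg (rep X))).
Definition qbot := cls Bot.
Definition qtop := cls Top.
Definition qbox := locked (fun X => cls (Box (rep X))).

Lemma qjoinE p q : qjoin (cls p) (cls q) = cls (Or p q).
Proof. rewrite /qjoin -lock; cbv beta; by apply/cls_eq; apply: qr_or; apply: rep_cls. Qed.
Lemma qmeetE p q : qmeet (cls p) (cls q) = cls (And p q).
Proof. rewrite /qmeet -lock; cbv beta; by apply/cls_eq; apply: qr_and; apply: rep_cls. Qed.
Lemma qcomplE p : qcompl (cls p) = cls (Neg p).
Proof. rewrite /qcompl -lock; cbv beta; by apply/cls_eq; apply: qr_neg; apply: rep_cls. Qed.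
Lemma qboxE p : qbox (cls p) = cls (Box p).
Proof. rewrite /qbox -lock; cbv beta; by apply/cls_eq; apply: qr_box; apply: rep_cls. Qed.


Lemma sem_eq p q : (forall C : modalAlgebra, forall e : nat -> C,
              aeval e p = aeval e q) -> cls p = cls q.
Proof. by move=> H; apply/cls_eq; apply: qr_sem => C _ e; apply: H. Qed.

Ltac qsolve := repeat (let X := fresh "X" in
     match goal with |- forall _ : qT, _ => move=> X; case: (cls_surj X) => ? -> {X} end);
  rewrite ?qjoinE ?qmeetE ?qcomplE ?qboxE ?qjoinE ?qmeetE ?qcomplE ?qboxE;
  apply: sem_eq => C e /=.

Lemma q_joinC : forall x y, qjoin x y = qjoin y x. Proof. qsolve; exact: joinC. Qed.
Lemma q_meetC : forall x y, qmeet x y = qmeet y x. Proof. qsolve; exact: meetC. Qed.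
Lemma q_joinA : forall x y z, qjoin x (qjoin y z) = qjoin (qjoin x y) z. Proof. qsolve; exact: joinA. Qed.
Lemma q_meetA : forall x y z, qmeet x (qmeet y z) = qmeet (qmeet x y) z. Proof. qsolve; exact: meetA. Qed.
Lemma q_joinKmeet : forall x y, qjoin x (qmeet x y) = x. Proof. qsolve; exact: joinKmeet. Qed.
Lemma q_meetKjoin : forall x y, qmeet x (qjoin x y) = x. Proof. qsolve; exact: meetKjoin. Qed.
Lemma q_meet_joinDr : forall x y z, qmeet x (qjoin y z) = qjoin (qmeet x y) (qmeet x z).
Proof. qsolve. exact: meet_joinDr. Qed.
Lemma q_join_meetDr : forall x y z, qjoin x (qmeet y z) = qmeet (qjoin x y) (qjoin x z).
Proof. qsolve; exact: join_meetDr. Qed.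
Lemma q_join0x : forall x, qjoin qbot x = x. Proof. rewrite /qbot; qsolve; exact: join0x. Qed.
Lemma q_meet1x : forall x, qmeet qtop x = x. Proof. rewrite /qtop; qsolve; exact: meet1x. Qed.
Lemma q_join_compl : forall x, qjoin x (qcompl x) = qtop. Proof. rewrite /qtop; qsolve; exact: join_compl. Qed.
Lemma q_meet_compl : forall x, qmeet x (qcompl x) = qbot. Proof. rewrite /qbot; qsolve; exact: meet_compl. Qed.
Lemma q_box_top : qbox qtop = qtop. Proof. rewrite /qtop; qsolve; exact: box_top. Qed.
Lemma q_box_meet : forall x y, qbox (qmeet x y) = qmeet (qbox x) (qbox y). Proof. qsolve; exact: box_meet. Qed.

Definition Qalg : modalAlgebra := ModalAlgebra q_joinC q_meetC q_joinA q_meetA q_joinKmeet q_meetKjoin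
  q_meet_joinDr q_join_meetDr q_join0x q_meet1x q_join_compl q_meet_compl q_box_top q_box_meet.

Lemma QjoinE p q : @join (Qalg) (cls p) (cls q) = cls (Or p q). Proof. exact: qjoinE. Qed.
Lemma QmeetE p q : @meet (Qalg) (cls p) (cls q) = cls (And p q). Proof. exact: qmeetE. Qed.
Lemma QcomplE p : @compl (Qalg) (cls p) = cls (Neg p). Proof. exact: qcomplE. Qed.
Lemma QboxE p : @box (Qalg) (cls p) = cls (Box p). Proof. exact: qboxE. Qed.
Lemma QbotE : @bot Qalg = cls Bot. Proof. by []. Qed.
Lemma QtopE : @top Qalg = cls Top. Proof. by []. Qed.

Lemma cls_subst (s : nat -> fm) p :
  aeval (A := Qalg) (fun i => cls (s i)) p = cls (subst s p).
Proof.
elim: p => //= [a ->|a -> b ->|a -> b ->|a -> b ->|a ->].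
- exact: qcomplE.
- exact: qmeetE.
- exact: qjoinE.
- have E : cls (Imp (subst s a) (subst s b)) = cls (Or (Neg (subst s a)) (subst s b)) by apply: sem_eq.
  by rewrite E qcomplE qjoinE.
- exact: qboxE.
Qed.

Lemma Qalg_VL : V_L L Qalg.
Proof.
move=> p Lp v.
have -> : v = fun i => cls (rep (v i)) by apply: functional_extensionality => i; rewrite cls_rep.
rewrite cls_subst; apply/cls_eq; apply: qr_sem => C VC e.
by rewrite aeval_subst /=; apply: VC.
Qed.

End Quot.

Section Rels.
Variable L : fm -> Prop.

Definition th (K : forall C : modalAlgebra, (nat -> C) -> Prop) (p q : fm) : Prop :=
  forall (C : modalAlgebra) (e : nat -> C), V_L L C -> K C e -> aeval e p = aeval e q.

Definition th_qrel (K : forall C : modalAlgebra, (nat -> C) -> Prop) : qrel L.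
Proof.
refine (@QRel L (th K) _ _ _ _ _ _ _ _ _); rewrite /th.
- by [].
- by move=> p q H C e VC KC; rewrite H.
- by move=> p q r H1 H2 C e VC KC; rewrite H1 ?H2.
- by move=> p q H C e VC KC /=; rewrite H.
- by move=> p p' q q' H1 H2 C e VC KC /=; rewrite H1 ?H2.
- by move=> p p' q q' H1 H2 C e VC KC /=; rewrite H1 ?H2.
- by move=> p p' q q' H1 H2 C e VC KC /=; rewrite H1 ?H2.
- by move=> p q H C e VC KC /=; rewrite H.
- by move=> p q H C e VC KC; apply: H.
Defined.

Definition sig_cut (k : nat) : nat -> fm := fun i => if i < k then Var i else Bot.

Lemma aeval_cut (C : modalAlgebra) (e : nat -> C) k p :
  aeval e (subst (sig_cut k) p) = aeval (fun i => if i < k then e i else bot) p.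
Proof. by rewrite aeval_subst; apply: aeval_ext => i; rewrite /sig_cut; case: (i < k). Qed.

Lemma th_cut K k p : (forall C e, K C e -> forall i, k <= i -> e i = bot) ->
  th K (subst (sig_cut k) p) p.
Proof.
move=> HK C e VC KC; rewrite aeval_cut; apply: aeval_ext => i.
by case: ltnP => // H; rewrite (HK _ _ KC).
Qed.

Definition condE (C : modalAlgebra) (a b c d s : C) :=
  [/\ ale a s, s = tt3 s b c & ale s d].

Definition KP (C : modalAlgebra) (e : nat -> C) :=
  (forall i, 5 <= i -> e i = bot) /\ condE (e 0) (e 1) (e 2) (e 3) (e 4).
Definition KS (C : modalAlgebra) (e : nat -> C) :=
  (forall i, 4 <= i -> e i = bot) /\ exists s, condE (e 0) (e 1) (e 2) (e 3) s.
Definition Kn (n : nat) (C : modalAlgebra) (e : nat -> C) :=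
  (forall i, 4 <= i -> e i = bot) /\ ale (titer n (e 0) (e 1) (e 2)) (e 3).

Arguments KP : clear implicits.
Arguments KS : clear implicits.
Arguments Kn : clear implicits.

Definition thw p q := exists n, th (Kn n) p q.

Lemma Kn_mono m n C e : m <= n -> Kn n C e -> Kn m C e.
Proof. by move=> mn [H1 H2]; split => //; apply: ale_trans H2; apply: titer_monok. Qed.

Lemma th_mono m n p q : m <= n -> th (Kn m) p q -> th (Kn n) p q.
Proof. by move=> mn H C e VC KC; apply: H => //; apply: Kn_mono KC. Qed.

Definition thw_qrel : qrel L.
Proof.
refine (@QRel L thw _ _ _ _ _ _ _ _ _); rewrite /thw.
- by move=> p; exists 0; apply: (qr_refl (th_qrel _)).
- by move=> p q [n H]; exists n; apply: (qr_sym (q0 := th_qrel _)).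
- move=> p q r [m H1] [n H2]; exists (maxn m n).
  apply: (qr_trans (q0 := th_qrel (Kn (maxn m n)))); first [exact: (th_mono (leq_maxl m n) H1)|exact: (th_mono (leq_maxl m n) H2)|exact: (th_mono (leq_maxr m n) H2)|exact: (th_mono (leq_maxr m n) H1)].
- by move=> p q [n H]; exists n; apply: (qr_neg (q0 := th_qrel _)).
- move=> p p' q q' [m H1] [n H2]; exists (maxn m n).
  apply: (qr_and (q0 := th_qrel (Kn (maxn m n)))); first [exact: (th_mono (leq_maxl m n) H1)|exact: (th_mono (leq_maxl m n) H2)|exact: (th_mono (leq_maxr m n) H2)|exact: (th_mono (leq_maxr m n) H1)].
- move=> p p' q q' [m H1] [n H2]; exists (maxn m n).
  apply: (qr_or (q0 := th_qrel (Kn (maxn m n)))); first [exact: (th_mono (leq_maxl m n) H1)|exact: (th_mono (leq_maxl m n) H2)|exact: (th_mono (leq_maxr m n) H2)|exact: (th_mono (leq_maxr m n) H1)].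
- move=> p p' q q' [m H1] [n H2]; exists (maxn m n).
  apply: (qr_imp (q0 := th_qrel (Kn (maxn m n)))); first [exact: (th_mono (leq_maxl m n) H1)|exact: (th_mono (leq_maxl m n) H2)|exact: (th_mono (leq_maxr m n) H2)|exact: (th_mono (leq_maxr m n) H1)].
- by move=> p q [n H]; exists n; apply: (qr_box (q0 := th_qrel _)).
- by move=> p q H; exists 0; apply: (qr_sem (th_qrel _)).
Defined.

End Rels.

Arguments KP : clear implicits.
Arguments KS : clear implicits.
Arguments Kn : clear implicits.


Definition Tf (p q r : fm) : fm := Or (Box (Or q (Box (Or r p)))) p.
Fixpoint TF (k : nat) (p q r : fm) : fm :=
  match k with 0 => p | k'.+1 => Tf (TF k' p q r) q r end.

Lemma aeval_TF (C : modalAlgebra) (e : nat -> C) k p q r :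
  aeval e (TF k p q r) = titer k (aeval e p) (aeval e q) (aeval e r).
Proof. by elim: k => //= k ->. Qed.

Lemma cls_titer L (R : qrel L) k p q r :
  titer (A := Qalg R) k (cls R p) (cls R q) (cls R r) = cls R (TF k p q r).
Proof.
elim: k => //= k ->.
by rewrite /tt3 !(qjoinE, qboxE).
Qed.

Section Cplx.
Variables (W : finType) (R : rel W).

Definition cjoin (X Y : W -> bool) := fun w => X w || Y w.
Definition cmeet (X Y : W -> bool) := fun w => X w && Y w.
Definition ccompl (X : W -> bool) := fun w => ~~ X w.
Definition cbot : W -> bool := fun _ => false.
Definition ctop : W -> bool := fun _ => true.
Definition cbox (X : W -> bool) := fun w => [forall u, R w u ==> X u].

Ltac fe := let w := fresh "w" in apply: functional_extensionality => w; rewrite /cjoin /cmeet /ccompl /cbot /ctop.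

Lemma c_joinC x y : cjoin x y = cjoin y x. Proof. by fe; rewrite orbC. Qed.
Lemma c_meetC x y : cmeet x y = cmeet y x. Proof. by fe; rewrite andbC. Qed.
Lemma c_joinA x y z : cjoin x (cjoin y z) = cjoin (cjoin x y) z. Proof. by fe; rewrite orbA. Qed.
Lemma c_meetA x y z : cmeet x (cmeet y z) = cmeet (cmeet x y) z. Proof. by fe; rewrite andbA. Qed.
Lemma c_joinKmeet x y : cjoin x (cmeet x y) = x. Proof. by fe; case: (x w). Qed.
Lemma c_meetKjoin x y : cmeet x (cjoin x y) = x. Proof. by fe; case: (x w). Qed.
Lemma c_meet_joinDr x y z : cmeet x (cjoin y z) = cjoin (cmeet x y) (cmeet x z).
Proof. by fe; case: (x w); case: (y w). Qed.
Lemma c_join_meetDr x y z : cjoin x (cmeet y z) = cmeet (cjoin x y) (cjoin x z).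
Proof. by fe; case: (x w); case: (y w). Qed.
Lemma c_join0x x : cjoin cbot x = x. Proof. by fe. Qed.
Lemma c_meet1x x : cmeet ctop x = x. Proof. by fe. Qed.
Lemma c_join_compl x : cjoin x (ccompl x) = ctop. Proof. by fe; case: (x w). Qed.
Lemma c_meet_compl x : cmeet x (ccompl x) = cbot. Proof. by fe; case: (x w). Qed.
Lemma c_box_top : cbox ctop = ctop.
Proof. by fe; rewrite /cbox; apply/forallP => u; rewrite implybT. Qed.
Lemma c_box_meet x y : cbox (cmeet x y) = cmeet (cbox x) (cbox y).
Proof.
fe; rewrite /cbox; apply/idP/idP.
  move/forallP=> H; apply/andP; split; apply/forallP=> u; move: (H u);
  by case: (R w u) => //= /andP[].
case/andP=> /forallP H1 /forallP H2; apply/forallP=> u; move: (H1 u) (H2 u).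
by case: (R w u) => //= -> ->.
Qed.

Definition CA : modalAlgebra := ModalAlgebra c_joinC c_meetC c_joinA c_meetA c_joinKmeet c_meetKjoin
  c_meet_joinDr c_join_meetDr c_join0x c_meet1x c_join_compl c_meet_compl c_box_top c_box_meet.

Lemma ksatE (v : nat -> W -> bool) p w : aeval (A := CA) v p w = true <-> ksat R v w p.
Proof.
elim: p w => //= [a IH|a IHa b IHb|a IHa b IHb|a IHa b IHb|a IH] w.
- rewrite /ccompl -IH; case: (aeval (A:=CA) v a w); split => //.
- rewrite /cmeet -IHa -IHb; split; [by move/andP | by case=> -> ->].
- rewrite /cjoin -IHa -IHb; split; [by move/orP | by case=> ->; rewrite ?orbT].
- rewrite /cjoin /ccompl -IHa -IHb; case: (aeval (A:=CA) v a w); case: (aeval (A:=CA) v b w); split => //=; auto.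
- rewrite /cbox; split.
    by move/forallP=> H u Ru; apply/IH; move: (H u); rewrite Ru.
  by move=> H; apply/forallP => u; apply/implyP => Ru; apply/IH; apply: H.
Qed.

Lemma CA_VL (L : fm -> Prop) : (forall p, L p -> frame_valid R p) -> V_L L CA.
Proof.
move=> H p Lp v; apply: functional_extensionality => w.
by apply/ksatE; apply: H.
Qed.

End Cplx.

Section Chain.
Variables (W : finType) (R : rel W).
Hypothesis hch : is_chain R.

Definition rk (w : W) := #|[pred u | R u w && (u != w)]|.

Lemma Rtr x y z : (x == y) || R x y -> (y == z) || R y z -> (x == z) || R x z.
Proof. have := hch; rewrite /is_chain /= => -[H _ _]; exact: H. Qed.
Lemma Ranti x y : (x == y) || R x y -> (y == x) || R y x -> x = y.
Proof. have := hch; rewrite /is_chain /= => -[_ H _]; exact: H. Qed.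
Lemma Rtot x y : ((x == y) || R x y) \/ ((y == x) || R y x).
Proof. have := hch; rewrite /is_chain /= => -[_ _ H]; exact: H. Qed.

Lemma rk_lt u w : R u w -> u != w -> rk u < rk w.
Proof.
move=> Ruw nuw; apply: proper_card; apply/properP; split.
  apply/subsetP => v; rewrite !inE => /andP [Rvu nvu].
  have H : (v == w) || R v w by apply: (Rtr (y:=u)); rewrite ?Rvu ?Ruw orbT.
  case: (eqVneq v w) => [Evw|nvw]; last by rewrite andbT; move: H; rewrite (negbTE nvw).
  subst v; exfalso; move/negP: nuw; apply; apply/eqP; apply: Ranti; by rewrite ?Ruw ?Rvu orbT.
exists u; first by rewrite !inE Ruw nuw.
by rewrite !inE eqxx andbF.
Qed.

Lemma rk_R u w : rk u < rk w -> R u w.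
Proof.
move=> H; have [H1|H2] := Rtot u w.
  by case/orP: H1 => [/eqP E|//]; subst; rewrite ltnn in H.
case/orP: H2 => [/eqP E|Rwu]; first by subst; rewrite ltnn in H.
have nwu : w != u by apply/eqP => E; subst; rewrite ltnn in H.
by have := rk_lt Rwu nwu; lia.
Qed.

Lemma rk_inj : injective rk.
Proof.
move=> u w E; apply/eqP; apply/negPn/negP => nuw.
have [H1|H2] := Rtot u w.
  case/orP: H1 => [/eqP E'|Ruw]; first by rewrite E' eqxx in nuw.
  by have := rk_lt Ruw nuw; lia.
case/orP: H2 => [/eqP E'|Rwu]; first by rewrite E' eqxx in nuw.
- have nwu : w != u by rewrite eq_sym.
  by have := rk_lt Rwu nwu; lia.
Qed.

Lemma rk_bound w : rk w < #|W|.
Proof.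
rewrite /rk; set A := [pred u | R u w && (u != w)].
have E := cardC A.
have H : 0 < #|[predC A]|.
  by apply/card_gt0P; exists w; rewrite !inE eqxx andbF.
move: E H; set x := #|A|; set y := #|[predC A]|; set z := #|W|; lia.
Qed.

Lemma rk_onto k : k < #|W| -> exists w, rk w = k.
Proof.
move=> Hk.
pose f := fun w : W => (Ordinal (rk_bound w) : 'I_#|W|).
have finj : injective f by move=> u w /(congr1 val) /= /rk_inj.
have cr : #|'I_#|W| | <= #|W| by rewrite card_ord.
have := @inj_card_onto _ _ f finj cr (Ordinal Hk).
by case/codomP => w /(congr1 val) /= ->; exists w.
Qed.

Definition cY : W -> bool := fun w => ~~ odd (rk w).
Definition cZ : W -> bool := fun w => odd (rk w).

Lemma tt3E (X Y Z : W -> bool) w :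
  tt3 (A := CA R) X Y Z w =
  [forall u, R w u ==> Y u || [forall v, R u v ==> Z v || X v]] || X w.
Proof. by []. Qed.

Definition Up (X : W -> bool) := forall w u, X w -> rk w <= rk u -> X u.

Lemma box_up (X : W -> bool) : Up (fun w => [forall u, R w u ==> X u]).
Proof.
move=> w u /forallP H le; apply/forallP => v; apply/implyP => Ruv.
case: (eqVneq u w) => [E|nuw]; first by subst; move: (H v); rewrite Ruv.
have ltwu : rk w < rk u.
  by rewrite ltn_neqAle le andbT; apply/eqP => /rk_inj E; rewrite E eqxx in nuw.
have : rk w < rk v.
  case: (eqVneq v u) => [E|nvu]; first by subst.
  by have := rk_lt Ruv (ltac:(by rewrite eq_sym)); lia.
by move/rk_R => Rwv; move: (H v); rewrite Rwv.
Qed.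

Lemma boxb (X : W -> bool) (b : bool) l : l <= #|W| ->
  (forall u, X u -> (odd (rk u) == b) || (l <= rk u)) ->
  forall w, [forall u, R w u ==> X u] -> l <= rk w + 2.
Proof.
move=> hl HX w /forallP Hw; rewrite leqNgt; apply/negP => lt.
have [u1 E1] := rk_onto (k := (rk w).+1) (ltac:(lia)).
have [u2 E2] := rk_onto (k := (rk w).+2) (ltac:(lia)).
have R1 : R w u1 by apply: rk_R; lia.
have R2 : R w u2 by apply: rk_R; lia.
have h1 := HX u1 (implyP (Hw u1) R1).
have h2 := HX u2 (implyP (Hw u2) R2).
rewrite E1 in h1; rewrite E2 in h2.
have F1 : (l <= (rk w).+1) = false by apply/negbTE; rewrite -ltnNge; lia.
have F2 : (l <= (rk w).+2) = false by apply/negbTE; rewrite -ltnNge; lia.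
rewrite F1 orbF /= in h1; rewrite F2 orbF /= in h2.
clear HX; move: h1 h2; case: (odd (rk w)); case: b => //.
Qed.

Lemma step_bound (X : W -> bool) l : l <= #|W| -> (forall u, X u -> l <= rk u) ->
  forall w, tt3 (A := CA R) X cY cZ w -> l <= rk w + 4.
Proof.
move=> hl HX w; rewrite tt3E => /orP [H|H]; last by have := HX _ H; lia.
have Hin : forall u, [forall v, R u v ==> cZ v || X v] -> l <= rk u + 2.
  apply: (boxb (b := true)) => // v /orP [Zv|Xv]; first by rewrite /cZ in Zv; rewrite Zv.
  by rewrite HX ?orbT.
have := boxb (X := fun u => cY u || [forall v, R u v ==> cZ v || X v]) (b := false) (l := l - 2).
move=> /(_ ltac:(lia)) H2.
suff: l - 2 <= rk w + 2 by lia.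
apply: H2 H => u /orP [Yu|Iu]; first by rewrite /cY in Yu; rewrite (negbTE Yu).
by have := Hin _ Iu => Hl; apply/orP; right; lia.
Qed.

Lemma strict (X : W -> bool) w0 : Up X -> X w0 = false ->
  exists w, tt3 (A := CA R) X cY cZ w && ~~ X w.
Proof.
move=> HU Xw0.
have P0 : ~~ X w0 by rewrite Xw0.
case: (@arg_maxnP _ w0 (fun u => ~~ X u) rk P0) => w nXw Hmax.
exists w; rewrite nXw andbT tt3E; apply/orP; left.
have Hab : forall u, rk w < rk u -> X u.
  by move=> u lt; apply/negPn/negP => /Hmax; lia.
have Hin : forall u, X u -> [forall v, R u v ==> cZ v || X v].
  move=> u Xu; apply/forallP => v; apply/implyP => Ruv; apply/orP; right.
  case: (eqVneq v u) => [->//|nvu]; apply: HU Xu _.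
  by have := rk_lt Ruv (ltac:(by rewrite eq_sym)); lia.
apply/forallP => u; apply/implyP => Rwu.
case: (eqVneq u w) => [E|nuw]; last first.
  by apply/orP; right; apply: Hin; apply: Hab; apply: rk_lt Rwu _; rewrite eq_sym.
subst u; rewrite /cY; case Ho: (odd (rk w)) => //=.
apply/forallP => v; apply/implyP => Rwv.
case: (eqVneq v w) => [->|nvw]; first by rewrite /cZ Ho.
by apply/orP; right; apply: Hab; apply: rk_lt Rwv _; rewrite eq_sym.
Qed.

Lemma up_tt3 X : Up X -> Up (tt3 (A:=CA R) X cY cZ).
Proof.
move=> HU w u; rewrite !tt3E => /orP [H|H] le; apply/orP.
  by left; exact: (box_up H le).
by right; exact: HU H le.
Qed.

End Chain.

Lemma chain_bad (L : fm -> Prop) n : admits_finite_chains L ->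
  exists (C : modalAlgebra) (a b c : C), V_L L C /\
    join (compl (titer n.+1 a b c)) (titer n a b c) <> top.
Proof.
move=> /(_ (4 * n).+1) [W [R [cW hch hval]]].
exists (CA R), (@cbot W), (cY R), (cZ R); split; first exact: CA_VL.
have Hup : forall k, Up R (titer (A := CA R) k (@cbot W) (cY R) (cZ R)).
  elim => [|k IH]; [by move=> w u | exact: up_tt3 IH].
have Hbd : forall k w, titer (A := CA R) k (@cbot W) (cY R) (cZ R) w -> #|W| - 4 * k <= rk R w.
  elim => [|k IH] w //=.
  move=> /(step_bound hch (l := #|W| - 4 * k) (leq_subr _ _) IH); move: (#|W|) (rk R w) => a r; lia.
have [w0 E0] := rk_onto hch (k := 0) ltac:(lia).
have X0 : titer (A := CA R) n (@cbot W) (cY R) (cZ R) w0 = false.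
  by apply/negP => /Hbd; lia.
have [w /andP [H1 H2]] := strict hch (Hup n) X0.
move=> E; have := congr1 (fun f => f w) E => /=.
rewrite /cjoin /ccompl /ctop /=.
by change (~~ tt3 (A := CA R) (titer (A := CA R) n (@cbot W) (cY R) (cZ R)) (cY R) (cZ R) w
   || titer (A := CA R) n (@cbot W) (cY R) (cZ R) w = true -> False);
  rewrite H1 (negbTE H2).
Qed.

Section Main.
Variable L : fm -> Prop.

Definition RP := th_qrel L KP.
Definition RS := th_qrel L KS.
Definition Rw := thw_qrel L.
Definition PA := Qalg RP.
Definition SA := Qalg RS.
Definition CwA := Qalg Rw.

Lemma transS p q : th L KS p q -> th L KP (subst (sig_cut 4) p) (subst (sig_cut 4) q).
Proof.
move=> H C e VC [He [h1 h2 h3]]; rewrite !aeval_cut; apply: H => //; split.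
  by move=> i /= hi; rewrite ltnNge hi.
by exists (e 4); split.
Qed.

Lemma transP p q : th L KP (subst (sig_cut 4) p) (subst (sig_cut 4) q) -> th L KS p q.
Proof.
move=> H C e VC [He [s [h1 h2 h3]]].
pose e' := fun i => if i < 4 then e i else if i == 4 then s else bot.
have E : forall r, aeval e r = aeval e' (subst (sig_cut 4) r).
  move=> r; rewrite aeval_cut; apply: aeval_ext => i; rewrite /e'.
  by case: ltnP => // /He.
rewrite !E; apply: H => //; split; last by split.
move=> i hi; rewrite /e'.
have -> : (i < 4) = false by apply/negbTE; lia.
by have -> : (i == 4) = false by apply/negbTE; lia.
Qed.

Definition femb (X : SA) : PA := cls RP (subst (sig_cut 4) (rep X)).

Lemma fembE p : femb (cls RS p) = cls RP (subst (sig_cut 4) p).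
Proof. apply/cls_eq; apply: transS; exact: (@rep_cls L RS p). Qed.

Lemma femb_emb : embedding femb.
Proof.
split; last first.
  move=> X Y; case: (cls_surj X) => p ->; case: (cls_surj Y) => q ->.
  by rewrite !fembE => /(cls_eq RP _ _) /transP /(cls_eq RS _ _).
split.
- move=> X Y; case: (cls_surj X) => p ->; case: (cls_surj Y) => q ->.
  by rewrite QjoinE !fembE QjoinE.
- move=> X Y; case: (cls_surj X) => p ->; case: (cls_surj Y) => q ->.
  by rewrite QmeetE !fembE QmeetE.
- move=> X; case: (cls_surj X) => p ->.
  by rewrite QcomplE !fembE QcomplE.
split.
- by rewrite QbotE fembE.
- by rewrite QtopE fembE.
- move=> X; case: (cls_surj X) => p ->.
  by rewrite QboxE !fembE QboxE.
Qed.

Definition gsP : seq PA := [:: cls RP (Var 0); cls RP (Var 1); cls RP (Var 2); cls RP (Var 3); cls RP (Var 4)].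

Lemma valP i : val_of gsP i = cls RP (sig_cut 5 i).
Proof. case: i => [|[|[|[|[|i]]]]]; try reflexivity. rewrite /sig_cut. have -> : (i.+1.+4 < 5) = false by apply/negbTE; lia. rewrite /val_of /gsP /= nth_nil; reflexivity. Qed.

Lemma aevP p : aeval (val_of gsP) p = cls RP p.
Proof.
rewrite (aeval_ext _ valP) cls_subst; apply/cls_eq; apply: th_cut.
by move=> C e [H _].
Qed.

Definition EP : seq (fm * fm) :=
  [:: (Or (Var 0) (Var 4), Var 4); (Var 4, Tf (Var 4) (Var 1) (Var 2)); (Or (Var 4) (Var 3), Var 3)].

Lemma P_fp : fin_presented (V_L L) PA.
Proof.
exists gsP, EP; split.
- by move=> X; case: (cls_surj X) => p ->; exists p; apply: aevP.
- move=> e /= [<-|[<-|[<-|[]]]]; rewrite !aevP; apply/cls_eq => C e' VC [_ [h1 h2 h3]] //=.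
- move=> C VC cs scs Hrel.
  have KPc : KP C (val_of cs).
    split; first by move=> i hi; rewrite /val_of nth_default // scs.
    split.
    + exact: (Hrel _ (or_introl erefl)).
    + exact: (Hrel _ (or_intror (or_introl erefl))).
    + exact: (Hrel _ (or_intror (or_intror (or_introl erefl)))).
  pose h := fun X : PA => aeval (val_of cs) (rep X).
  have hE : forall p, h (cls RP p) = aeval (val_of cs) p.
    by move=> p; rewrite /h; apply: (@rep_cls L RP p) => //.
  exists h; split; last first.
    move=> i hi; have := valP i; rewrite /val_of => ->; rewrite hE /sig_cut.
    by rewrite ifT.
  split.
  + move=> X Y; case: (cls_surj X) => p ->; case: (cls_surj Y) => q ->.
    by rewrite QjoinE !hE.
  + move=> X Y; case: (cls_surj X) => p ->; case: (cls_surj Y) => q ->.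
    by rewrite QmeetE !hE.
  + move=> X; case: (cls_surj X) => p ->.
    by rewrite QcomplE !hE.
  split.
  + by rewrite QbotE hE.
  + by rewrite QtopE hE.
  + move=> X; case: (cls_surj X) => p ->.
    by rewrite QboxE !hE.
Qed.

Definition gsS : seq SA := [:: cls RS (Var 0); cls RS (Var 1); cls RS (Var 2); cls RS (Var 3)].

Lemma S_fg : fin_generated SA.
Proof.
exists gsS => X; case: (cls_surj X) => p ->; exists p.
have valS : forall i, val_of gsS i = cls RS (sig_cut 4 i).
  move=> i; case: i => [|[|[|[|i]]]]; try reflexivity.
  rewrite /sig_cut; have -> : (i.+4 < 4) = false by apply/negbTE; lia.
  by rewrite /val_of /gsS /= nth_nil.
rewrite (aeval_ext _ valS) cls_subst; apply/cls_eq; apply: th_cut.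
by move=> C e [H _].
Qed.

End Main.

Section Main2.
Variable L : fm -> Prop.
Hypothesis fec : fixpoint_embedding_condition L.

Lemma aevW p : aeval (A := CwA L) (fun i => cls (Rw L) (sig_cut 4 i)) p = cls (Rw L) p.
Proof.
rewrite cls_subst; apply/(cls_eq (Rw L) _ _); exists 0; apply: th_cut.
by move=> C e [H _].
Qed.

Lemma lemA p q : th L KS p q -> thw L p q.
Proof.
move=> H.
have VCw := @Qalg_VL L (Rw L).
have FG : fin_generated (CwA L).
  exists [:: cls (Rw L) (Var 0); cls (Rw L) (Var 1); cls (Rw L) (Var 2); cls (Rw L) (Var 3)].
  move=> X; case: (cls_surj X) => r ->; exists r; apply: (etrans _ (aevW r)); apply: aeval_ext.
  move=> i; case: i => [|[|[|[|i]]]]; try reflexivity.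
  rewrite /sig_cut; have -> : (i.+4 < 4) = false by apply/negbTE; lia.
  by rewrite /val_of /= nth_nil.
have [B [f [VB [hf finj] [s [[lub1 lub2] fixs]]]]] :=
  fec VCw FG (cls (Rw L) (Var 0)) (cls (Rw L) (Var 1)) (cls (Rw L) (Var 2)).
pose eB := fun i => f (cls (Rw L) (sig_cut 4 i)).
have KSe : KS B eB.
  split.
    move=> i hi; rewrite /eB /sig_cut.
    have -> : (i < 4) = false by apply/negbTE; lia.
    by case: hf => _ _ _ [-> _ _].
  exists s; split => //.
    exact: (lub1 0).
  apply: lub2 => k; rewrite -(hom_titer hf); apply: (hom_ale hf).
  rewrite /ale cls_titer /= qjoinE; apply/(cls_eq (Rw L) _ _); exists k.
  by move=> C e VC [_ Hk] /=; rewrite aeval_TF.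
have := H B eB VB KSe.
rewrite /eB -!(hom_aeval hf) !aevW => /finj.
by move/(cls_eq (Rw L) _ _).
Qed.

Lemma collect (A : Type) (l : seq A) (P : nat -> A -> Prop) :
  (forall m n a, m <= n -> P m a -> P n a) ->
  (forall a, List.In a l -> exists n, P n a) -> exists n, forall a, List.In a l -> P n a.
Proof.
move=> Pm; elim: l => [|a l IH] H; first by exists 0.
have [n1 H1] := H a (or_introl erefl).
have [n2 H2] := IH (fun b hb => H b (or_intror hb)).
exists (maxn n1 n2) => b /= [<-|hb].
  by apply: Pm H1; apply: leq_maxl.
by apply: Pm (H2 b hb); apply: leq_maxr.
Qed.

End Main2.

Theorem theorem4p3 (L : fm -> Prop) :
  normal_logic L -> admits_finite_chains L ->
  fixpoint_embedding_condition L ->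
  ~ coherent (V_L L).
Proof.
move=> _ chains fec coh.
have [gs [E' [gen rel univ]]] :=
  coh (PA L) (@Qalg_VL L (RP L)) (P_fp L) (SA L) (@femb L) (femb_emb L) (S_fg L).
pose pi := fun i => if i < size gs then rep (nth bot gs i) else Bot.
have valS : forall i, val_of gs i = cls (RS L) (pi i).
  move=> i; rewrite /pi /val_of; case: ltnP => hi; first by rewrite cls_rep.
  by rewrite nth_default.
have aevS : forall r, aeval (val_of gs) r = cls (RS L) (subst pi r).
  by move=> r; rewrite (aeval_ext _ valS) cls_subst.
have [n1 Hn1] : exists n, forall e, List.In e E' -> th L (Kn n) (subst pi e.1) (subst pi e.2).
  apply: (collect (P := fun n e => th L (Kn n) (subst pi e.1) (subst pi e.2))).
    by move=> m n a; apply: th_mono.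
  move=> e he; have := rel e he; rewrite !aevS => /(cls_eq (RS L) _ _).
  exact: lemA.
have [n2 Hn2] : exists n, forall j, List.In j [:: 0; 1; 2; 3] ->
    exists r, aeval (val_of gs) r = cls (RS L) (Var j) /\ th L (Kn n) (subst pi r) (Var j).
  apply: (collect (P := fun n j => exists r, aeval (val_of gs) r = cls (RS L) (Var j) /\
                          th L (Kn n) (subst pi r) (Var j))).
    by move=> m n a mn [r [h1 h2]]; exists r; split => //; apply: th_mono h2.
  move=> j _; have [r hr] := gen (cls (RS L) (Var j)).
  have := hr; rewrite aevS => /(cls_eq (RS L) _ _) /(lemA fec) [n hn].
  by exists n, r.
pose n := maxn n1 n2.
pose Rn := th_qrel L (Kn n).
pose cs : seq (Qalg Rn) := map (fun g => cls Rn (rep g)) gs.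
have valC : forall i, val_of cs i = cls Rn (pi i).
  move=> i; rewrite /pi /val_of; case: ltnP => hi.
    by rewrite /cs (nth_map (@bot (SA L))).
  by rewrite nth_default // /cs size_map.
have aevC : forall r, aeval (val_of cs) r = cls Rn (subst pi r).
  by move=> r; rewrite (aeval_ext _ valC) cls_subst.
have relC : forall e, List.In e E' -> aeval (val_of cs) e.1 = aeval (val_of cs) e.2.
  move=> e he; rewrite !aevC; apply/(cls_eq Rn _ _).
  by apply: (th_mono (leq_maxl n1 n2)); apply: Hn1.
have [h [hh hgen]] := univ (Qalg Rn) (@Qalg_VL L Rn) cs (size_map _ _) relC.
have hbot : h bot = bot by case: hh => _ _ _ [-> _ _].
have htop : h top = top by case: hh => _ _ _ [_ -> _].
have hval : forall i, h (val_of gs i) = val_of cs i.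
  move=> i; case: (ltnP i (size gs)) => hi; first exact: hgen.
  by rewrite /val_of !nth_default ?size_map.
have hvar : forall i, h (cls (RS L) (sig_cut 4 i)) = cls Rn (sig_cut 4 i).
  move=> i; rewrite /sig_cut; case: ltnP => hi; last exact: hbot.
  have [r [hr1 hr2]] : exists r, aeval (val_of gs) r = cls (RS L) (Var i) /\
     th L (Kn n2) (subst pi r) (Var i).
    by apply: Hn2; move: hi; case: i => [|[|[|[|i]]]] //= _; tauto.
  rewrite -hr1 (hom_aeval hh) (aeval_ext _ hval) aevC.
  by apply/(cls_eq Rn _ _); apply: (th_mono (leq_maxr n1 n2)).
pose q := Imp (TF n.+1 (Var 0) (Var 1) (Var 2)) (Var 3).
have qS : cls (RS L) q = cls (RS L) Top.
  apply/(cls_eq (RS L) _ _) => C e VC [_ [s [h1 h2 h3]]].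
  change (join (compl (aeval e (TF n.+1 (Var 0) (Var 1) (Var 2)))) (e 3) = top).
  rewrite aeval_TF; apply: ale_imp_top; apply: ale_trans h3.
  exact: titer_le_fix.
have qC : cls Rn q = cls Rn Top.
  have E1 : aeval (A := SA L) (fun i => cls (RS L) (sig_cut 4 i)) q = cls (RS L) q.
    rewrite cls_subst; apply/(cls_eq (RS L) _ _); apply: th_cut.
    by move=> C e [H _].
  have E2 : aeval (A := Qalg Rn) (fun i => cls Rn (sig_cut 4 i)) q = cls Rn q.
    rewrite cls_subst; apply/(cls_eq Rn _ _); apply: th_cut.
    by move=> C e [H _].
  rewrite -E2 -(aeval_ext _ hvar) -(hom_aeval hh) E1 qS.
  exact: htop.
have [C [a [b [c [VC Hne]]]]] := chain_bad n chains.
move/(cls_eq Rn _ _): qC.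
pose e := fun i => match i with 0 => a | 1 => b | 2 => c | 3 => titer n a b c | _ => bot end.
have Ke : Kn n C e.
  split; last exact: ale_refl.
  by case=> [|[|[|[|i]]]].
move=> /(_ C e VC Ke).
change (join (compl (aeval e (TF n.+1 (Var 0) (Var 1) (Var 2)))) (titer n a b c) = top -> False).
by rewrite aeval_TF.
Qed.
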